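(* Let $\mathcal M\otimes\mathcal A_\varphi$ be the product of a labelled MDP $\mathcal M=(S,\mathit{Act},P,\mu)$ with labelling $L$ and a deterministic Streett automaton $\mathcal A_\varphi=(Q,2^{AP},\delta,q_0,\mathit{Acc})$, with state space $S\times Q$. Let $\pi$ be a stationary policy on the product, $\gamma\in(0,1)$, $(A,B)\in\mathit{Acc}$ (so $A,B\subseteq Q$), and $I\subseteq S\times Q$ measurable. Write $U^\otimes:=(S\times B)\cup\mathrm{Abs}_\pi\big((S\times(A\cup B))^c\big)$ (complement taken in $S\times Q$). Assume: (1) $I$ is absorbing under $\pi$ in the product and $\mu^\otimes(I)=1$; (2) $\Pr_\pi(\tau_{U^\otimes}<\infty\mid S_0=x)=1$ for all $x\in I$; (3) there is $\bar H<\infty$ with $\mathbb{E}_\pi[\tau_{U^\otimes}\mid S_0=x]\le\bar H$ for all $x\in((S\times A)\setminus(S\times B))\cap I$; (4) the reward is $r^\otimes((s,q),a,(s',q'))=\mathbf 1_{\{(s,q)\in U^\otimes\}}$. Then $W(s,q):=C-V^\pi(s,q)$ on $I$, with $C:=\frac1{1-\gamma}$, is a Streett supermartingale for $(S\times A,S\times B)$ on $\mathcal M\otimes\mathcal A_\varphi$ with supporting invariant $I$.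
   Context: An MDP $(S,\mathit{Act},P,\mu)$ has state/action spaces finite/countable or Borel subsets of Euclidean space, a stochastic kernel $P$ on $S$ given $S\times\mathit{Act}$ and initial distribution $\mu$. A labelled MDP additionally has a finite set $AP$ of atomic propositions and a labelling $L:S\to2^{AP}$. A deterministic Streett automaton is $(Q,2^{AP},\delta,q_0,\mathit{Acc})$ with finite $Q$, $\delta:Q\times2^{AP}\to Q$, $q_0\in Q$, and $\mathit{Acc}$ a finite set of pairs $(A_i,B_i)$, $A_i,B_i\subseteq Q$. The product MDP $\mathcal M\otimes\mathcal A_\varphi$ has state space $S\times Q$, actions $\mathit{Act}$, transitions from $(s,q)$ under $a$ to $(s',\delta(q,L(s)))$ with $s'\sim P(\cdot\mid s,a)$, and initial distribution $\mu^\otimes=\mu\otimes\delta_{q_0}$. A stationary policy $\pi$ is a stochastic kernel on actions given states; $\Pr_\pi(\cdot\mid S_0=x)$, $\mathbb{E}_\pi[\cdot\mid S_0=x]$ refer to the product process started at $x$. Value function: $V^\pi(x)=\mathbb{E}_\pi[\sum_{t\ge0}\gamma^t r^\otimes(S_t,A_t,S_{t+1})\mid S_0=x]$. A measurable set $X$ is absorbing if $\Pr_\pi(S_1\in X\mid S_0=x)=1$ for all $x\in X$; $\mathrm{Abs}_\pi(X):=\{x:\Pr_\pi(\forall t\ge0:S_t\in X\mid S_0=x)=1\}$; $\tau_U:=\inf\{t\ge0:S_t\in U\}$. Streett supermartingale (on a state space $\mathcal X$ with initial distribution $\nu$): for measurable $A',B',I\subseteq\mathcal X$, $W:I\to[0,\infty)$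 is a Streett supermartingale for $(A',B')$ with supporting invariant $I$ if $\nu(I)=1$, $\Pr_\pi(S_1\in I\mid S_0=x)=1$ for $x\in I$, there is $\varepsilon>0$ with $\mathbb{E}_\pi[W(S_1)\mid S_0=x]\le W(x)-\varepsilon$ for $x\in(A'\setminus B')\cap I$, and $\mathbb{E}_\pi[W(S_1)\mid S_0=x]\le W(x)$ for $x\in I\setminus(A'\cup B')$. *)

(* Defs.v *)
From Stdlib Require List.
From HB Require Import structures.
From mathcomp Require Import all_boot all_order all_algebra.
From mathcomp Require Import all_classical all_reals all_analysis.
Set Implicit Arguments. Unset Strict Implicit. Unset Printing Implicit Defensive.
Import Order.TTheory GRing.Theory Num.Theory.
Local Open Scope classical_set_scope.
Local Open Scope ring_scope.

(* Finite-dimensional distributions of the state-action process of the product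
   MDP M (x) A_phi under the stationary policy [pol], started at x = (s,q):
   A_t ~ pol(S_t), s_{t+1} ~ P(. | s_t, A_t), q_{t+1} = delta q_t (L s_t).
   [prod_fdd Cs x] is the probability (Ionescu-Tulcea) that
   (S_t, A_t) \in nth Cs t for all t < size Cs. *)
Fixpoint prod_fdd {R : realType} {dS dQ dA : measure_display}
  {S : measurableType dS} {Q : measurableType dQ} {Act : measurableType dA}
  {AP : finType}
  (P : R.-pker (S * Act)%type ~> S) (pol : R.-pker (S * Q)%type ~> Act)
  (L : S -> {set AP}) (delta : Q -> {set AP} -> Q)
  (Cs : seq (set ((S * Q) * Act)%type)) (x : (S * Q)%type) : \bar R :=
  match Cs with
  | [::] => 1%E
  | C :: Cs' =>
      (\int[pol x]_a ((\1_C (x, a))%:E *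
         \int[P (x.1, a)]_s' prod_fdd P pol L delta Cs' (s', delta x.2 (L x.1))))%E
  end.

(* (Omega, Pr x, St, At) realizes the product process started at x, for every
   start x: Pr x is the law Pr_pi( . | S_0 = x) of the state/action process
   (St t, At t)_t, characterized by its finite-dimensional distributions. *)
Definition product_process {R : realType} {dS dQ dA dO : measure_display}
  {S : measurableType dS} {Q : measurableType dQ} {Act : measurableType dA}
  {AP : finType} {Omega : measurableType dO}
  (P : R.-pker (S * Act)%type ~> S) (pol : R.-pker (S * Q)%type ~> Act)
  (L : S -> {set AP}) (delta : Q -> {set AP} -> Q)
  (Pr : (S * Q)%type -> probability Omega R)
  (St : nat -> Omega -> (S * Q)%type) (At : nat -> Omega -> Act) : Prop :=
  [/\ (forall t, measurable_fun setT (St t)),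
      (forall t, measurable_fun setT (At t)) &
      forall (x : (S * Q)%type) (Cs : seq (set ((S * Q) * Act)%type)),
        (forall C, List.In C Cs -> measurable C) ->
        Pr x (\bigcap_(t in [set t | (t < size Cs)%N])
                 [set w | nth set0 Cs t (St t w, At t w)])
        = prod_fdd P pol L delta Cs x].

Section ProcessDefs.
Context {R : realType} {dX dO dA : measure_display}
  {X : measurableType dX} {Omega : measurableType dO} {Act : measurableType dA}.
Variables (Pr : X -> probability Omega R) (St : nat -> Omega -> X).

Definition absorbing (Y : set X) : Prop :=
  forall x, Y x -> Pr x [set w | Y (St 1 w)] = 1%E.

Definition Abs (Y : set X) : set X :=
  [set x | Pr x (\bigcap_t [set w | Y (St t w)]) = 1%E].

Definition hit (U : set X) (w : Omega) : \bar R :=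
  ereal_inf [set (t%:R)%:E | t in [set t | U (St t w)]].

Definition value (At : nat -> Omega -> Act) (r : X -> Act -> X -> R)
  (gamma : R) (x : X) : R :=
  fine (\int[Pr x]_w
          \sum_(t <oo) ((gamma ^+ t * r (St t w) (At t w) (St t.+1 w))%:E))%E.

(* Streett supermartingale W for (A', B') with supporting invariant I,
   on state space X with initial distribution nu (W : I -> [0,oo) is
   represented by a real function on X that is nonnegative on I). *)
Definition streett_supermartingale (nu : set X -> \bar R)
  (A' B' I : set X) (W : X -> R) : Prop :=
  [/\ nu I = 1%E,
      (forall x, I x -> Pr x [set w | I (St 1 w)] = 1%E),
      (forall x, I x -> 0 <= W x),
      (exists2 eps : R, 0 < eps &
         forall x, ((A' `\` B') `&` I) x ->
           (\int[Pr x]_w (W (St 1 w))%:E <= (W x - eps)%:E)%E) &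
      (forall x, (I `\` (A' `|` B')) x ->
           (\int[Pr x]_w (W (St 1 w))%:E <= (W x)%:E)%E)].

End ProcessDefs.

Definition U_otimes {R : realType} {dS dQ dO : measure_display}
  {S : measurableType dS} {Q : measurableType dQ} {Omega : measurableType dO}
  (Pr : (S * Q)%type -> probability Omega R) (St : nat -> Omega -> (S * Q)%type)
  (A B : set Q) : set (S * Q)%type :=
  ([set: S] `*` B) `|` Abs Pr St (~` ([set: S] `*` (A `|` B))).

(* mu (x) delta_{q0} as a set function on S x Q *)
Definition init_otimes {R : realType} {dS dQ : measure_display}
  {S : measurableType dS} {Q : measurableType dQ}
  (mu : probability S R) (q0 : Q) (Y : set (S * Q)%type) : \bar R :=
  mu [set s | Y (s, q0)].

(* Main.v *)
Require Import Defs.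
From Stdlib Require List.
From HB Require Import structures.
From mathcomp Require Import all_boot all_order all_algebra.
From mathcomp Require Import all_classical all_reals all_analysis.
From mathcomp Require Import measurable_realfun.
From mathcomp Require Import lra.
Import Order.TTheory GRing.Theory Num.Theory.
Import numFieldTopology.Exports numFieldNormedType.Exports.
Local Open Scope classical_set_scope.
Local Open Scope ring_scope.

Section Pk_def.
Context {R : realType} {dS dQ dA : measure_display}
  {S : measurableType dS} {Q : measurableType dQ} {Act : measurableType dA}.
Variable P : R.-pker (S * Act)%type ~> S.

Definition Pk (xa : ((S * Q) * Act)%type) : {measure set S -> \bar R} :=
  P (xa.1.1, xa.2).

Lemma mPkmap : measurable_fun [set: ((S * Q) * Act)%type]
   (fun xa : ((S * Q) * Act)%type => (xa.1.1, xa.2)).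
Proof.
apply: measurable_fun_pair.
  exact: measurableT_comp measurable_fst measurable_fst.
exact: measurable_snd.
Qed.

Let mPk U : measurable U -> measurable_fun [set: ((S * Q) * Act)%type]
   (fun xa => (Pk xa U : \bar R)).
Proof.
move=> mU; exact: measurableT_comp (measurable_kernel P U mU) mPkmap.
Qed.

HB.instance Definition _ := isKernel.Build _ _ _ _ R Pk mPk.

Let Pk1 xa : Pk xa [set: S] = 1%E.
Proof. by rewrite /Pk prob_kernel. Qed.

HB.instance Definition _ := Kernel_isProbability.Build _ _ _ _ _ Pk Pk1.
End Pk_def.

Section AE.
Local Open Scope ereal_scope.
Context {R : realType} {dO : measure_display} {Omega : measurableType dO}.
Variable m : probability Omega R.

Lemma prob_fin (E : set Omega) : measurable E -> m E = (fine (m E))%:E.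
Proof.
move=> mE; rewrite fineK // ge0_fin_numE ?measure_ge0 //.
by apply: (le_lt_trans (probability_le1 m mE)); rewrite ltry.
Qed.

Lemma ae_of_meas1 (E : set Omega) : measurable E -> m E = 1 ->
  \forall w \ae m, E w.
Proof.
move=> mE mE1; exists (~` E); split => //; first exact: measurableC.
by rewrite probability_setC // mE1 subee.
Qed.

Lemma meas1_of_ae (E : set Omega) : measurable E ->
  (\forall w \ae m, E w) -> m E = 1.
Proof.
move=> mE [N [mN mN0 sub]].
have h0 : m (~` E) = 0.
  apply: (subset_measure0 _ mN) => //; first exact: measurableC.
have := probability_setC m mE; rewrite h0 (prob_fin _ mE).
rewrite -EFinB => /eqP; rewrite eqe => /eqP H.
by congr (_%:E); lra.
Qed.

Lemma ae_int1 (g : Omega -> \bar R) : measurable_fun setT g ->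
  (forall w, 0 <= g w <= 1) -> \int[m]_w g w = 1 -> \forall w \ae m, g w = 1.
Proof.
move=> mg g01 ig.
have gfin w : g w \is a fin_num.
  have /andP[g0 g1] := g01 w.
  by rewrite ge0_fin_numE // (le_lt_trans g1) // ltry.
pose h w := 1 - g w.
have h0 w : 0 <= h w.
  by rewrite /h subre_ge0 //; have /andP[] := g01 w.
have mh : measurable_fun setT h by apply: emeasurable_funB.
have H := ge0_integralD m measurableT (fun w _ => h0 w) mh
   (fun w _ => proj1 (andP (g01 w))) mg.
have E1 : \int[m]_x (h x + g x) = 1.
  rewrite (eq_integral (cst 1)); last by move=> w _; rewrite /h subeK.
  by rewrite integral_cst // mul1e; exact: probability_setT.
rewrite E1 ig in H.
have ih : \int[m]_w h w = 0.
  have ih0 : 0 <= \int[m]_w h w by apply: integral_ge0.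
  move: H ih0; case: (\int[m]_w h w) => [r| |] //.
  by rewrite -EFinD => /eqP; rewrite eqe => /eqP H _; congr (_%:E); lra.
have : \int[m]_(w in setT) `|h w| = 0.
  by rewrite -ih; apply: eq_integral => w _; rewrite gee0_abs.
move/(ae_eq_integral_abs m measurableT mh).
apply: filterS => w /(_ I) /= hw.
by move: hw; rewrite /h => /eqP; rewrite sube_eq ?add0e // => /eqP <-.
Qed.

End AE.

Lemma geo_es {R : realType} (g : R) : (0 <= g < 1)%R ->
  (\sum_(t <oo) ((g ^+ t)%:E) = ((1 - g)^-1)%:E)%E.
Proof.
move=> /andP[g0 g1].
have gabs : `|g| < 1 by rewrite ger0_norm.
have cv := @cvg_geometric_series _ 1 _ gabs.
transitivity (limn (EFin \o series (geometric 1 g))).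
  apply/congr_lim/funext => n /=.
  rewrite sumEFin seriesEnat /=.
  by congr (_%:E); apply: eq_bigr => i _; rewrite /geometric /= mul1r.
rewrite EFin_lim; last exact: is_cvg_geometric_series.
congr (_%:E); rewrite -[RHS]mul1r; exact: cvg_lim cv.
Qed.

Lemma le_int_nm {d} {T : measurableType d} {R : realType}
  (m : {measure set T -> \bar R}) (f g : T -> \bar R) :
  (forall w, 0 <= f w)%E -> (forall w, f w <= g w)%E ->
  (\int[m]_w f w <= \int[m]_w g w)%E.
Proof.
move=> f0 fg; have g0 w : (0 <= g w)%E by exact: le_trans (f0 w) (fg w).
rewrite !ge0_integralTE //; apply: ereal_sup_le => _ [h hf <-].
by exists h => //= x; exact: le_trans (hf x) (fg x).
Qed.

Section Main.
Local Open Scope ereal_scope.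
Context {R : realType} {dS dQ dA dO : measure_display}
  {S : measurableType dS} {Q : measurableType dQ} {Act : measurableType dA}
  {AP : finType} {Omega : measurableType dO}.
Variables (P : R.-pker (S * Act)%type ~> S) (pol : R.-pker (S * Q)%type ~> Act)
  (L : S -> {set AP}) (delta : Q -> {set AP} -> Q)
  (Pr : (S * Q)%type -> probability Omega R)
  (St : nat -> Omega -> (S * Q)%type) (At : nat -> Omega -> Act).
Hypothesis allQ : forall D : set Q, measurable D.
Hypothesis mL : forall l : {set AP}, measurable (L @^-1` [set l]).
Hypothesis pp : product_process P pol L delta Pr St At.

Local Notation X := (S * Q)%type.

Definition fq (x : X) : Q := delta x.2 (L x.1).
Definition nxt (p : ((X * Act) * S)%type) : X := (p.2, fq p.1.1).

Lemma mfq : measurable_fun [set: X] fq.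
Proof.
move=> _ D _; rewrite setTI.
have -> : fq @^-1` D = \bigcup_(l in [set: {set AP}])
   (L @^-1` [set l] `*` [set q | D (delta q l)]).
  apply/seteqP; split => [[s q] /= Dx|[s q] [l _ [/= Ls Dq]]].
    by exists (L s) => //.
  by rewrite /fq /= Ls.
apply: fin_bigcup_measurable.
  exact: (@finite_finset _ [set: {set AP}]).
by move=> l _; apply: measurableX => //.
Qed.

Lemma mnxt : measurable_fun [set: ((X * Act) * S)%type] nxt.
Proof.
apply: measurable_fun_pair; first exact: measurable_snd.
apply: measurableT_comp mfq _.
exact: measurableT_comp measurable_fst measurable_fst.
Qed.

Definition K1 := Pk P \; kdirac mnxt.
Definition K2 := pol \; K1.

Definition Top (g : X -> \bar R) (x : X) : \bar R :=
  \int[pol x]_a \int[P (x.1, a)]_s g (s, fq x).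

Lemma K2_int (g : X -> \bar R) x : (forall y, 0 <= g y) -> measurable_fun setT g ->
  \int[K2 x]_y g y = Top g x.
Proof.
move=> g0 mg.
rewrite /K2 /= integral_kcomp //.
apply: eq_integral => a _.
rewrite /K1 /= integral_kcomp //.
apply: eq_integral => s _.
rewrite /kdirac /= integral_dirac // diracT mul1e //.
Qed.


Lemma mSt t : measurable_fun [set: Omega] (St t).
Proof. by case: pp. Qed.

Lemma fdd (x : X) (Cs : seq (set (X * Act)%type)) :
  (forall C, List.In C Cs -> measurable C) ->
  Pr x (\bigcap_(t in [set t | (t < size Cs)%N])
                 [set w | nth set0 Cs t (St t w, At t w)])
  = prod_fdd P pol L delta Cs x.
Proof. by case: pp => _ _; apply. Qed.

Definition cs (t : nat) (Y : set X) : seq (set (X * Act)%type) :=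
  rcons (nseq t [set: (X * Act)%type]) (Y `*` [set: Act]).

Lemma cs_meas t Y : measurable Y -> forall C, List.In C (cs t Y) -> measurable C.
Proof.
move=> mY; elim: t => [|t IH] C /=.
  by move=> [<-|//]; exact: measurableX.
by move=> [<-|/IH//]; exact: measurableT.
Qed.

Lemma cyl_cs t Y :
  \bigcap_(i in [set i | (i < size (cs t Y))%N])
     [set w | nth set0 (cs t Y) i (St i w, At i w)] = St t @^-1` Y.
Proof.
rewrite /cs size_rcons size_nseq; apply/seteqP; split => w /=.
  move=> /(_ t (ltnSn t)); rewrite nth_rcons size_nseq ltnn eqxx.
  by case.
move=> Yw i /= it; rewrite nth_rcons size_nseq nth_nseq.
case: ltnP => // ti; have -> : i = t by apply/eqP; rewrite eqn_leq ti -ltnS it.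
by rewrite eqxx.
Qed.

Lemma indicX1 (Y : set X) (x : X) (a : Act) :
  (\1_(Y `*` [set: Act]) (x, a))%:E = (\1_Y x)%:E :> \bar R.
Proof.
rewrite !indicE; congr (_%:R%:E).
congr nat_of_bool.
by apply/idP/idP => /set_mem H; apply/mem_set; [case: H|split].
Qed.

Definition pt (Y : set X) t (x : X) : \bar R := prod_fdd P pol L delta (cs t Y) x.

Lemma ptE Y t x : measurable Y -> Pr x (St t @^-1` Y) = pt Y t x.
Proof. by move=> mY; rewrite -cyl_cs fdd //; exact: cs_meas. Qed.

Lemma pt0 Y x : pt Y 0 x = (\1_Y x)%:E.
Proof.
rewrite /pt /cs /=.
under eq_integral => a _.
  rewrite integral_cst // mul1e prob_kernel mule1.
  have -> : (\1_(Y `*` [set: Act]) (x, a))%:E = (\1_Y x)%:E :> \bar R.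
    exact: indicX1.
  over.
by rewrite integral_cst // prob_kernel mule1.
Qed.

Lemma ptS Y t x : pt Y t.+1 x = Top (pt Y t) x.
Proof.
rewrite /pt /= /Top; apply: eq_integral => a _.
by rewrite indicT /= mul1e.
Qed.


Lemma mTop g : (forall y, 0 <= g y) -> measurable_fun setT g ->
  measurable_fun setT (Top g).
Proof.
move=> g0 mg.
have -> : Top g = kfcomp pol (kfcomp (Pk P) (g \o nxt)) by [].
apply: measurable_kfcomp.
  apply: measurable_kfcomp; first exact: measurableT_comp mg mnxt.
  by move=> ?; exact: g0.
by move=> ?; apply: integral_ge0 => ? _; exact: g0.
Qed.

Lemma Top_ge0 g x : (forall y, 0 <= g y) -> 0 <= Top g x.
Proof.
by move=> g0; apply: integral_ge0 => a _; apply: integral_ge0 => s _.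
Qed.

Lemma pt_ge0 Y t x : 0 <= pt Y t x.
Proof.
elim: t x => [|t IH] x; first by rewrite pt0 lee_fin.
by rewrite ptS; apply: Top_ge0.
Qed.

Lemma mpt Y t : measurable Y -> measurable_fun setT (pt Y t).
Proof.
move=> mY; elim: t => [|t IH].
  rewrite (_ : pt Y 0 = (fun x => (\1_Y x)%:E)); last by apply/funext => x; rewrite pt0.
  by apply/measurable_EFinP; exact: measurable_indic.
rewrite (_ : pt Y t.+1 = Top (pt Y t)); last by apply/funext => x; rewrite ptS.
by apply: mTop => //; exact: pt_ge0.
Qed.

Lemma bridge x g : (forall y, 0 <= g y) -> measurable_fun setT g ->
  \int[Pr x]_w g (St 1 w) = Top g x.
Proof.
move=> g0 mg.
have H := ge0_integral_pushforward (mSt 1) (Pr x) measurableT mg (fun y _ => g0 y).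
rewrite preimage_setT in H.
rewrite -K2_int //.
rewrite -[LHS]/(\int[Pr x]_(w in setT) (g \o St 1) w) -H.
apply: eq_measure_integral; first exact: mSt.
move=> mS1 A mA _.
rewrite -[LHS]/(Pr x (St 1 @^-1` A)).
rewrite ptE // ptS.
rewrite (_ : pt A 0 = (fun y => (\1_A y)%:E)); last by apply/funext => y; rewrite pt0.
rewrite -K2_int //; last by apply/measurable_EFinP; exact: measurable_indic.
by rewrite integral_indic // setIT.
Qed.

Lemma pt_markov Y t x : measurable Y ->
  pt Y t.+1 x = \int[Pr x]_w pt Y t (St 1 w).
Proof.
by move=> mY; rewrite ptS bridge //; [exact: pt_ge0| exact: mpt].
Qed.

Lemma pt_le1 Y t x : measurable Y -> pt Y t x <= 1.
Proof.
move=> mY; rewrite -ptE //; apply: probability_le1.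
by rewrite -[X in measurable X]setTI; apply: (mSt t).
Qed.


Lemma mpre t (Y : set X) : measurable Y -> measurable (St t @^-1` Y).
Proof. by move=> mY; rewrite -[X in measurable X]setTI; exact: mSt. Qed.

Lemma AbsE Y : measurable Y -> Abs Pr St Y = [set y | forall t, pt Y t y = 1].
Proof.
move=> mY; have mI : measurable (\bigcap_t [set w | Y (St t w)]).
  by apply: bigcapT_measurable => t; exact: mpre.
apply/seteqP; split => y /=.
- move=> H t; apply/le_anti/andP; split; first exact: pt_le1.
  rewrite -H -ptE //; apply: le_measure; rewrite ?inE //; first exact: mpre.
  by move=> w /(_ t I).
- move=> H; apply: meas1_of_ae => //.
  have : \forall w \ae Pr y, forall t, Y (St t w).
    apply: ae_foralln => t; apply: ae_of_meas1; first exact: mpre.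
    by rewrite ptE // H.
  by apply: filterS => w Hw t _; exact: Hw.
Qed.

Lemma mAbs Y : measurable Y -> measurable (Abs Pr St Y).
Proof.
move=> mY; rewrite AbsE //.
have -> : [set y | forall t, pt Y t y = 1] = \bigcap_t (pt Y t @^-1` [set 1]).
  by apply/seteqP; split => [y H t _|y H t]; [exact: H|exact: H t I].
apply: bigcapT_measurable => t; rewrite -[X in measurable X]setTI.
by apply: (mpt Y t mY) => //; exact: emeasurable_set1.
Qed.

Lemma Abs_step Y y : measurable Y -> Abs Pr St Y y ->
  Pr y (St 1 @^-1` (Abs Pr St Y)) = 1.
Proof.
move=> mY Hy; apply: meas1_of_ae; first by apply: mpre; exact: mAbs.
move: Hy; rewrite AbsE //= => Hy.
have : \forall w \ae Pr y, forall t, pt Y t (St 1 w) = 1.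
  apply: ae_foralln => t; apply: ae_int1.
  - exact: measurableT_comp (mpt Y t mY) (mSt 1).
  - by move=> w; rewrite pt_ge0 pt_le1.
  - by rewrite -pt_markov // Hy.
by apply: filterS.
Qed.

Lemma Abs_all Y : measurable Y -> forall t y, Abs Pr St Y y ->
  pt (Abs Pr St Y) t y = 1.
Proof.
move=> mY; have mAb := mAbs _ mY.
elim=> [|t IH] y Hy; first by rewrite pt0 indicE mem_set.
apply/le_anti/andP; split; first exact: pt_le1.
rewrite pt_markov // -(Abs_step _ _ mY Hy).
rewrite (_ : Pr y _ = \int[Pr y]_w (\1_(St 1 @^-1` Abs Pr St Y) w)%:E); last first.
  by rewrite integral_indic ?setIT //; exact: mpre.
apply: ge0_le_integral => //.
- by apply/measurable_EFinP; apply: measurable_indic; exact: mpre.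
- exact: measurableT_comp (mpt _ t mAb) (mSt 1).
- move=> w _; rewrite indicE; case: (boolP (w \in _)) => [/set_mem H|_].
    by rewrite IH.
  exact: pt_ge0.
Qed.


Definition Vb (U : set X) (g : R) (x : X) : \bar R :=
  \sum_(t <oo) ((g ^+ t)%:E * pt U t x).

Lemma mVb U g : measurable U -> (0 <= g)%R -> measurable_fun setT (Vb U g).
Proof.
move=> mU g0.
apply: (@ge0_emeasurable_sum _ _ _ setT (fun t x => (g ^+ t)%:E * pt U t x) predT).
  by move=> k x _ _; apply: mule_ge0; [rewrite lee_fin exprn_ge0|exact: pt_ge0].
by move=> k _; apply: measurable_funeM; exact: mpt.
Qed.

Lemma Vb_ge0 U g x : (0 <= g)%R -> 0 <= Vb U g x.
Proof.
move=> g0; apply: nneseries_ge0 => n _ _.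
by apply: mule_ge0; [rewrite lee_fin exprn_ge0|exact: pt_ge0].
Qed.

Lemma Vb_le U g x : measurable U -> (0 <= g < 1)%R -> Vb U g x <= ((1 - g)^-1)%:E.
Proof.
move=> mU g01; have /andP[g0 g1] := g01.
rewrite -geo_es //; apply: lee_nneseries.
  by move=> n _ _; apply: mule_ge0; [rewrite lee_fin exprn_ge0|exact: pt_ge0].
move=> n _; rewrite -[X in _ <= X]mule1; apply: lee_wpmul2l.
  by rewrite lee_fin exprn_ge0.
exact: pt_le1.
Qed.

Lemma Vb_fin U g x : measurable U -> (0 <= g < 1)%R -> Vb U g x \is a fin_num.
Proof.
move=> mU g01; have /andP[g0 g1] := g01.
rewrite ge0_fin_numE; last exact: Vb_ge0.
by apply: (le_lt_trans (Vb_le U g x mU g01)); rewrite ltry.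
Qed.


Lemma value_eq U g r x : measurable U -> (0 <= g)%R ->
  (forall x a y, r x a y = \1_U x) ->
  value Pr St At r g x = fine (Vb U g x).
Proof.
move=> mU g0 hr; rewrite /value; congr fine.
transitivity (\int[Pr x]_w \sum_(t <oo) ((g ^+ t)%:E * (\1_(St t @^-1` U) w)%:E)).
  apply: eq_integral => w _; apply: eq_eseriesr => t _.
  by rewrite hr EFinM.
rewrite integral_nneseries //.
- apply: eq_eseriesr => t _; rewrite ge0_integralZl //.
  + rewrite integral_indic // ?setIT; last exact: mpre.
    by congr (_ * _); exact: ptE.
  + by apply/measurable_EFinP; apply: measurable_indic; exact: mpre.
  + by rewrite lee_fin exprn_ge0.
- move=> t; apply: measurable_funeM.
  by apply/measurable_EFinP; apply: measurable_indic; exact: mpre.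
- by move=> t w _; rewrite -EFinM lee_fin mulr_ge0 // exprn_ge0.
Qed.

Definition e1 (U : set X) (g : R) (x : X) : \bar R :=
  \sum_(t <oo) ((g ^+ t)%:E * pt U t.+1 x).

Lemma intVb U g x : measurable U -> (0 <= g)%R ->
  \int[Pr x]_w Vb U g (St 1 w) = e1 U g x.
Proof.
move=> mU g0; rewrite /Vb integral_nneseries //.
- apply: eq_eseriesr => t _; rewrite ge0_integralZl //.
  + by rewrite -pt_markov.
  + exact: measurableT_comp (mpt U t mU) (mSt 1).
  + by move=> w _; exact: pt_ge0.
  + by rewrite lee_fin exprn_ge0.
- move=> t; apply: measurable_funeM.
  exact: measurableT_comp (mpt U t mU) (mSt 1).
- by move=> t w _; apply: mule_ge0; [rewrite lee_fin exprn_ge0|exact: pt_ge0].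
Qed.

Lemma e1_le U g x : measurable U -> (0 <= g < 1)%R -> e1 U g x <= ((1 - g)^-1)%:E.
Proof.
move=> mU g01; have /andP[g0 g1] := g01.
rewrite -geo_es //; apply: lee_nneseries.
  by move=> n _ _; apply: mule_ge0; [rewrite lee_fin exprn_ge0|exact: pt_ge0].
move=> n _; rewrite -[X in _ <= X]mule1; apply: lee_wpmul2l.
  by rewrite lee_fin exprn_ge0.
exact: pt_le1.
Qed.

Lemma e1_ge0 U g x : (0 <= g)%R -> 0 <= e1 U g x.
Proof.
move=> g0; apply: nneseries_ge0 => n _ _.
by apply: mule_ge0; [rewrite lee_fin exprn_ge0|exact: pt_ge0].
Qed.

Lemma e1_fin U g x : measurable U -> (0 <= g < 1)%R -> e1 U g x \is a fin_num.
Proof.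
move=> mU g01; have /andP[g0 g1] := g01.
rewrite ge0_fin_numE; last exact: e1_ge0.
by apply: (le_lt_trans (e1_le U g x mU g01)); rewrite ltry.
Qed.

Lemma intW U g x : measurable U -> (0 <= g < 1)%R ->
  \int[Pr x]_w (((1 - g)^-1 - fine (Vb U g (St 1 w)))%:E) =
  ((1 - g)^-1)%:E - e1 U g x.
Proof.
move=> mU g01; have /andP[g0 g1] := g01.
have mV1 : measurable_fun setT (fun w => Vb U g (St 1 w)).
  exact: measurableT_comp (mVb U g mU g0) (mSt 1).
have f10 : forall w, setT w -> 0 <= (((1 - g)^-1 - fine (Vb U g (St 1 w)))%:E).
  move=> w _; rewrite lee_fin subr_ge0 -lee_fin fineK; first exact: Vb_le.
  exact: Vb_fin.
have mf1 : measurable_fun setT (fun w => (((1 - g)^-1 - fine (Vb U g (St 1 w)))%:E)).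
  apply/measurable_EFinP; apply: measurable_funB => //.
  exact: measurableT_comp (fine_measurable measurableT) mV1.
have H := ge0_integralD (Pr x) measurableT f10 mf1 (fun w _ => Vb_ge0 U g (St 1 w) g0) mV1.
have E1 : \int[Pr x]_w ((((1 - g)^-1 - fine (Vb U g (St 1 w)))%:E) + Vb U g (St 1 w))
   = ((1 - g)^-1)%:E.
  rewrite (eq_integral (cst ((1 - g)^-1)%:E)); last first.
    by move=> w _; rewrite EFinB fineK ?subeK //; exact: Vb_fin.
  by rewrite integral_cst // -[RHS]mule1; congr (_ * _); exact: probability_setT.
rewrite E1 intVb // in H.
by rewrite H addeK //; exact: e1_fin.
Qed.

Lemma Vb_rec U g x : measurable U -> (0 <= g)%R ->
  Vb U g x = pt U 0 x + g%:E * e1 U g x.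
Proof.
move=> mU g0; rewrite /Vb nneseries_recl //; last first.
  by move=> k _; apply: mule_ge0; [rewrite lee_fin exprn_ge0|exact: pt_ge0].
rewrite expr0 mul1e; congr (_ + _).
rewrite -(@nneseries_addn _ _ 1); last first.
  by move=> k; apply: mule_ge0; [rewrite lee_fin exprn_ge0|exact: pt_ge0].
rewrite /e1 -nneseriesZl; last first.
  by move=> k _; apply: mule_ge0; [rewrite lee_fin exprn_ge0|exact: pt_ge0].
apply: eq_eseriesr => i _.
by rewrite addn1 exprS EFinM muleA.
Qed.


Lemma Vb_int U g x : measurable U -> (0 <= g)%R ->
  Vb U g x = \int[Pr x]_w \sum_(t <oo) ((g ^+ t)%:E * (\1_(St t @^-1` U) w)%:E).
Proof.
move=> mU g0; rewrite integral_nneseries //.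
- apply: eq_eseriesr => t _; rewrite ge0_integralZl //.
  + rewrite integral_indic // ?setIT; last exact: mpre.
    by congr (_ * _); symmetry; exact: ptE.
  + by apply/measurable_EFinP; apply: measurable_indic; exact: mpre.
  + by rewrite lee_fin exprn_ge0.
- move=> t; apply: measurable_funeM.
  by apply/measurable_EFinP; apply: measurable_indic; exact: mpre.
- by move=> t w _; rewrite -EFinM lee_fin mulr_ge0 // exprn_ge0.
Qed.

Lemma hit_ge0 U w : 0 <= hit (R:=R) St U w.
Proof. by apply: le_ereal_inf_tmp => _ [t _ <-]; rewrite lee_fin. Qed.

Lemma Vb_lb U g x Hb n : measurable U -> (0 < g < 1)%R ->
  \int[Pr x]_w hit (R:=R) St U w <= Hb%:E -> (2 * Hb < (n.+1)%:R)%R ->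
  ((g ^+ n) / 2)%:E <= Vb U g x.
Proof.
move=> mU /andP[g0 g1] hH hn.
pose F := \bigcap_(t in [set t | (t < n.+1)%N]) (St t @^-1` (~` U)).
have mF : measurable F.
  apply: bigcap_measurable; first by exists 0%N.
  by move=> t _; apply: mpre; exact: measurableC.
have hF : (n.+1)%:R%:E * Pr x F <= Hb%:E.
  apply: le_trans hH.
  rewrite (_ : (n.+1)%:R%:E * Pr x F = \int[Pr x]_w ((n.+1)%:R%:E * (\1_F w)%:E)); last first.
    rewrite ge0_integralZl //.
    + by rewrite integral_indic // setIT.
    + by apply/measurable_EFinP; exact: measurable_indic.
  apply: le_int_nm.
    by move=> w; apply: mule_ge0; rewrite lee_fin.
  move=> w; rewrite indicE; case: (boolP (w \in F)) => [/set_mem wF|_].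
    rewrite mule1; apply: le_ereal_inf_tmp => _ [t /= Ut <-].
    rewrite lee_fin ler_nat; case: ltnP => // tn.
    by have := wF t tn.
  by rewrite mule0; exact: hit_ge0.
have pF := prob_fin (Pr x) _ mF.
set p := fine (Pr x F) in pF.
have p0 : (0 <= p)%R by rewrite -lee_fin -pF; exact: measure_ge0.
rewrite pF -EFinM lee_fin in hF.
have p2 : (p <= 1 / 2)%R.
  have hn0 : (0 < (n.+1)%:R :> R)%R by rewrite ltr0n.
  nra.
rewrite Vb_int //; last exact: ltW.
apply: (@le_trans _ _ (\int[Pr x]_w ((g ^+ n)%:E * (\1_(~` F) w)%:E))).
  rewrite ge0_integralZl //; last 2 first.
    - by apply/measurable_EFinP; apply: measurable_indic; exact: measurableC.
    - by rewrite lee_fin exprn_ge0 // ltW.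
  rewrite integral_indic // ?setIT; last exact: measurableC.
  have HC : Pr x (~` F) = (1 - p)%:E by rewrite probability_setC // pF EFinB.
  rewrite [X in _ <= _ * X](_ : _ = (1 - p)%:E); last by rewrite -HC.
  rewrite -EFinM lee_fin.
  have gn0 : (0 <= g ^+ n)%R by rewrite exprn_ge0 // ltW.
  nra.
apply: ge0_le_integral => //.
- by move=> w _; rewrite -EFinM lee_fin mulr_ge0 // exprn_ge0 // ltW.
- apply/measurable_EFinP; apply: measurable_funM => //.
  by apply: measurable_indic; exact: measurableC.
- apply: (@ge0_emeasurable_sum _ _ _ setT
    (fun t w => (g ^+ t)%:E * (\1_(St t @^-1` U) w)%:E) predT).
    by move=> k w _ _; rewrite -EFinM lee_fin mulr_ge0 // exprn_ge0 // ltW.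
  move=> k _; apply: measurable_funeM.
  by apply/measurable_EFinP; apply: measurable_indic; exact: mpre.
move=> w _; rewrite indicE; case: (boolP (w \in ~` F)) => [/set_mem nF|_]; last first.
  rewrite /= mulr0n mule0; apply: nneseries_ge0 => i _ _.
  by rewrite -EFinM lee_fin mulr_ge0 // exprn_ge0 // ltW.
have [t [tn Ut]] : exists t, (t < n.+1)%N /\ U (St t w).
  apply: contrapT => H; apply: nF => t /= tn Ut; apply: H; by exists t.
rewrite /= mulr1n.
apply: (@le_trans _ _ (\sum_(0 <= i < t.+1) ((g ^+ i)%:E * (\1_(St i @^-1` U) w)%:E))).
  rewrite big_nat_recr //= indicE mem_set //= mulr1n mule1.
  apply: le_trans (leeDr _ _); last first.
    by apply: sume_ge0 => i _; rewrite -EFinM lee_fin mulr_ge0 // exprn_ge0 // ltW.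
  by rewrite mule1 lee_fin; apply: ler_wiXn2l => //; exact: ltW.
apply: nneseries_lim_ge => i _ _.
by rewrite -EFinM lee_fin mulr_ge0 // exprn_ge0 // ltW.
Qed.


Lemma pt_mono U V t x : measurable U -> measurable V -> U `<=` V -> pt U t x <= pt V t x.
Proof.
move=> mU mV UV; rewrite -!ptE //; apply: le_measure; rewrite ?inE; try exact: mpre.
by move=> w /= /UV.
Qed.

Lemma main_sec (gamma : R) (A B : set Q) (I : set X)
  (r : X -> Act -> X -> R) (Hbar : R) :
  (0 < gamma < 1)%R ->
  absorbing Pr St I ->
  (forall x, ((([set: S] `*` A) `\` ([set: S] `*` B)) `&` I) x ->
     (\int[Pr x]_w hit (R:=R) St (U_otimes Pr St A B) w <= Hbar%:E)%E) ->
  (forall x a y, r x a y = \1_(U_otimes Pr St A B) x) ->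
  [/\ (forall x, I x -> Pr x [set w | I (St 1 w)] = 1%E),
      (forall x, I x -> (0 <= (1 - gamma)^-1 - value Pr St At r gamma x)%R),
      (exists2 eps : R, (0 < eps)%R &
         forall x, ((([set: S] `*` A) `\` ([set: S] `*` B)) `&` I) x ->
           (\int[Pr x]_w (((1 - gamma)^-1 - value Pr St At r gamma (St 1 w))%R)%:E
             <= ((1 - gamma)^-1 - value Pr St At r gamma x - eps)%:E)%E) &
      (forall x, (I `\` (([set: S] `*` A) `|` ([set: S] `*` B))) x ->
           (\int[Pr x]_w (((1 - gamma)^-1 - value Pr St At r gamma (St 1 w))%R)%:E
             <= ((1 - gamma)^-1 - value Pr St At r gamma x)%:E)%E)].
Proof.
move=> g01 absI hH hr.
have /andP[g0 g1] := g01.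
have g01' : (0 <= gamma < 1)%R by rewrite ltW.
set U := U_otimes Pr St A B.
set Y := ~` ([set: S] `*` (A `|` B)).
have mY : measurable Y by apply: measurableC; apply: measurableX.
have mAb := mAbs Y mY.
have mB : measurable ([set: S] `*` B) by apply: measurableX.
have mU : measurable U by apply: measurableU.
have hv y : value Pr St At r gamma y = fine (Vb U gamma y).
  by apply: value_eq => //; exact: ltW.
have Vfin y := Vb_fin U gamma y mU g01'.
have efin y := e1_fin U gamma y mU g01'.
set C := ((1 - gamma)^-1)%R.
have hint x : \int[Pr x]_w ((C - value Pr St At r gamma (St 1 w))%R)%:E
              = (C - fine (e1 U gamma x))%:E.
  rewrite (eq_integral (fun w => ((C - fine (Vb U gamma (St 1 w)))%R)%:E)); last first.
    by move=> w _; rewrite hv.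
  by rewrite intW // EFinB fineK.
have VleC y : (fine (Vb U gamma y) <= C)%R.
  by rewrite -lee_fin fineK //; exact: Vb_le.
have V0 y : (0 <= fine (Vb U gamma y))%R.
  by rewrite -lee_fin fineK //; exact: Vb_ge0 (ltW g0).
have e0 y : (0 <= fine (e1 U gamma y))%R.
  by rewrite -lee_fin fineK //; exact: e1_ge0 (ltW g0).
have notU_rec x : ~ U x -> fine (Vb U gamma x) = (gamma * fine (e1 U gamma x))%R.
  move=> nU; rewrite Vb_rec //; last exact: ltW.
  rewrite pt0 indicE memNset // add0e.
  by rewrite -[RHS]/(fine (gamma%:E * (fine (e1 U gamma x))%:E)) fineK.
split.
- exact: absI.
- by move=> x _; rewrite hv subr_ge0.
- pose n := Num.truncn (2 * Hbar).
  exists ((1 - gamma) * (gamma ^+ n / 2))%R.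
    by apply: mulr_gt0; [rewrite subr_gt0|apply: divr_gt0 => //; exact: exprn_gt0].
  move=> x Hx; rewrite hint hv lee_fin.
  have [[_ Ax] nBx] := Hx.1.
  have nU : ~ U x.
    move=> [//|].
    rewrite AbsE // => /(_ 0%N); rewrite pt0 indicE memNset //.
      by move/eqP; rewrite /= mulr0n eqe eq_sym oner_eq0.
    by move=> /(_ (conj Logic.I (or_introl Ax))).
  have lb := Vb_lb U gamma x Hbar n mU g01 (hH x Hx) (truncnS_gt _).
  rewrite -(fineK (Vfin x)) lee_fin in lb.
  have hr2 := notU_rec x nU.
  have e0x := e0 x.
  have gn0 : (0 <= gamma ^+ n)%R by rewrite exprn_ge0 // ltW.
  have ev : (fine (Vb U gamma x) <= fine (e1 U gamma x))%R by rewrite hr2; nra.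
  have hp : (0 <= (1 - gamma) * (fine (e1 U gamma x) - gamma ^+ n / 2))%R.
    by apply: mulr_ge0; lra.
  rewrite hr2 in ev lb *; nra.
- move=> x [Ix nABx].
  have nBx : ~ ([set: S] `*` B) x by move=> [_ Bx]; apply: nABx; right.
  have [Ux|nUx] := pselect (U x).
  + have Abx : Abs Pr St Y x by case: Ux.
    have e1C : e1 U gamma x = C%:E.
      rewrite /e1 -geo_es //; apply: eq_eseriesr => t _.
      suff -> : pt U t.+1 x = 1 by rewrite mule1.
      apply/le_anti/andP; split; first exact: pt_le1.
      rewrite -(Abs_all Y mY t.+1 x Abx); apply: pt_mono => //.
      by move=> y Aby; right.
    rewrite hint e1C /= subrr lee_fin hv subr_ge0.
    exact: VleC.
  + rewrite hint hv lee_fin (notU_rec x nUx).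
    have e0x := e0 x.
    nra.
Qed.

End Main.

Theorem corollary1 (R : realType) (dS dQ dA dO : measure_display)
  (S : measurableType dS) (Q : measurableType dQ) (Act : measurableType dA)
  (AP : finType)
  (P : R.-pker (S * Act)%type ~> S) (mu : probability S R)
  (L : S -> {set AP})
  (delta : Q -> {set AP} -> Q) (q0 : Q) (Acc : seq (set Q * set Q))
  (pol : R.-pker (S * Q)%type ~> Act)
  (Omega : measurableType dO) (Pr : (S * Q)%type -> probability Omega R)
  (St : nat -> Omega -> (S * Q)%type) (At : nat -> Omega -> Act)
  (gamma : R) (A B : set Q) (I : set (S * Q)%type)
  (r : (S * Q)%type -> Act -> (S * Q)%type -> R) (Hbar : R) :
  finite_set [set: Q] ->
  (forall D : set Q, measurable D) ->
  (forall l : {set AP}, measurable (L @^-1` [set l])) ->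
  product_process P pol L delta Pr St At ->
  0 < gamma < 1 ->
  List.In (A, B) Acc ->
  measurable I ->
  absorbing Pr St I ->
  init_otimes mu q0 I = 1%E ->
  (forall x, I x -> Pr x [set w | (hit (R:=R) St (U_otimes Pr St A B) w < +oo)%E] = 1%E) ->
  (forall x, ((([set: S] `*` A) `\` ([set: S] `*` B)) `&` I) x ->
     (\int[Pr x]_w hit (R:=R) St (U_otimes Pr St A B) w <= Hbar%:E)%E) ->
  (forall x a y, r x a y = \1_(U_otimes Pr St A B) x) ->
  streett_supermartingale Pr St (init_otimes mu q0)
    ([set: S] `*` A) ([set: S] `*` B) I
    (fun x => (1 - gamma)^-1 - value Pr St At r gamma x).
Proof.
move=> finQ allQ mL pp g01 inAcc mI absI initI hfin hH hr.
have [h2 h3 h4 h5] := main_sec P pol L delta Pr St At allQ mL pp gamma A B I r Hbar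
  g01 absI hH hr.
by split.
Qed.
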